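(* Let $H \subset L$ be light-cone regular and let $h_1, \ldots, h_m \in L$. Then for every sufficiently large integer $\ell > 0$ we have $h_1, \ldots, h_m \in H + \ell v_N = \{ h + \ell v_N \mid h \in H \}$.
   Context: Let $L$ be a finitely generated $\mathbb{Z}$-module and $v_1,\dots,v_N\in L$ distinct elements which generate $L$ as a $\mathbb{Z}$-module and are linearly independent over $\mathbb{Z}_{\ge 0}$ (i.e. $\sum_i a_i v_i=0$ with all $a_i\in\mathbb{Z}_{\ge0}$ forces all $a_i=0$). Let $S=\{\sum_i a_iv_i : a_i\in\mathbb{Z}_{\ge0}\}$ and define the partial order $h_1\le h_2$ iff $h_1-h_2\in S$. Assume $v_N$ is the minimum of $\{0,v_1,\dots,v_N\}$ with respect to $\le$. A nonempty subset $H\subset L$ is light-cone regular if for every $h\in H$ the set $\{h'\in H: h'\le h\}$ is finite and $\{h'\in L: h'\ge h\}\subset H$. *)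

(* Defs.v *)
From HB Require Import structures.
From mathcomp Require Import all_boot all_order all_algebra.
Set Implicit Arguments. Unset Strict Implicit. Unset Printing Implicit Defensive.
Import GRing.Theory.
Local Open Scope ring_scope.

(* Vectors v_1, ..., v_N are encoded as v : 'I_N.+1 -> L (0-based indices);
   the paper's v_N is  v ord_max . *)

Definition inS (L : zmodType) (n : nat) (v : 'I_n -> L) (x : L) : Prop :=
  exists a : 'I_n -> nat, x = \sum_(i < n) v i *+ a i.

Definition leS (L : zmodType) (n : nat) (v : 'I_n -> L) (h1 h2 : L) : Prop :=
  inS v (h1 - h2).

Definition good_generators (L : zmodType) (n : nat) (v : 'I_n.+1 -> L) : Prop :=
  [/\ injective v,
      (forall x : L, exists z : 'I_n.+1 -> int, x = \sum_(i < n.+1) v i *~ z i),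
      (forall a : 'I_n.+1 -> nat,
          \sum_(i < n.+1) v i *+ a i = 0 -> forall i, a i = 0%N),
      leS v (v ord_max) 0
    & forall i, leS v (v ord_max) (v i)].

Definition light_cone_regular (L : zmodType) (n : nat) (v : 'I_n -> L)
    (H : L -> Prop) : Prop :=
  (exists h, H h) /\
  forall h, H h ->
    (exists s : seq L, forall h', H h' -> leS v h' h -> h' \in s) /\
    (forall h', leS v h h' -> H h').

(* Main.v *)
Require Import Defs.
From mathcomp Require Import all_boot all_order all_algebra.
Import GRing.Theory.
Local Open Scope ring_scope.

Section Aux.
Variables (L : zmodType) (n : nat) (v : 'I_n -> L).

Lemma inS0 : inS v 0.
Proof. by exists (fun _ => 0%N); rewrite big1 // => i _; rewrite mulr0n. Qed.

Lemma inSD x y : inS v x -> inS v y -> inS v (x + y).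
Proof.
case=> a ->; case=> b ->; exists (fun i => (a i + b i)%N).
by rewrite -big_split /=; apply: eq_bigr => i _; rewrite mulrnDr.
Qed.

Lemma inSMn x k : inS v x -> inS v (x *+ k).
Proof.
move=> Hx; elim: k => [|k IH]; first by rewrite mulr0n; exact: inS0.
by rewrite mulrS; apply: inSD.
Qed.

Lemma inSv i : inS v (v i).
Proof.
exists (fun j => (j == i)%N : nat).
rewrite (bigD1 i) //= eqxx mulr1n big1 ?addr0 // => j /negbTE ->.
by rewrite mulr0n.
Qed.
End Aux.

Section Main.
Variables (L : zmodType) (n : nat) (v : 'I_n.+1 -> L).
Hypothesis Hv : good_generators v.

Definition P (x : L) := exists K : nat, forall l, (K <= l)%N ->
  inS v (x + v ord_max *+ l).

Lemma P0 : P 0.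
Proof. by exists 0%N => l _; rewrite add0r; apply: inSMn; apply: inSv. Qed.

Lemma PD x y : P x -> P y -> P (x + y).
Proof.
case=> K1 H1; case=> K2 H2; exists (K1 + K2)%N => l Hl.
have -> : x + y + v ord_max *+ l =
   (x + v ord_max *+ K1) + (y + v ord_max *+ (l - K1)).
  by rewrite addrACA -mulrnDr subnKC // (leq_trans (leq_addr _ _) Hl).
apply: inSD; first exact: H1.
apply: H2; rewrite leq_subRL ?(leq_trans (leq_addr _ _) Hl) //.
Qed.

Lemma Pterm i z : P (v i *~ z).
Proof.
case: Hv => _ _ _ _ Hle.
case: z => k.
  exists 0%N => l _; rewrite pmulrn; apply: inSD; apply: inSMn; exact: inSv.
exists k.+1 => l Hl; rewrite NegzE mulrNz pmulrn.
have -> : - (v i *+ k.+1) + v ord_max *+ l =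
   (v ord_max - v i) *+ k.+1 + v ord_max *+ (l - k.+1).
  by rewrite mulrnBl -[in LHS](subnKC Hl) mulrnDr addrA (addrC (- _)).
by apply: inSD; [apply: inSMn; apply: Hle | apply: inSMn; apply: inSv].
Qed.

Lemma Pall x : P x.
Proof.
case: Hv => _ Hgen _ _ _.
case: (Hgen x) => z ->.
apply: (big_ind P); [exact: P0 | exact: PD | move=> i _; exact: Pterm].
Qed.
End Main.

Theorem lemma3p2 (L : zmodType) (n : nat) (v : 'I_n.+1 -> L)
    (Hv : good_generators v) (H : L -> Prop)
    (HH : light_cone_regular v H) (m : nat) (hs : 'I_m -> L) :
  exists l0 : nat, forall l : nat, (l0 <= l)%N -> (0 < l)%N ->
    forall j : 'I_m, exists h : L, H h /\ hs j = h + v ord_max *+ l.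
Proof.
case: HH => [[h0 Hh0] Hreg].
have key : forall s : seq 'I_m, exists K : nat, forall j, j \in s ->
    forall l, (K <= l)%N -> inS v (h0 - hs j + v ord_max *+ l).
  elim=> [|j s [K IH]]; first by exists 0%N.
  case: (@Pall L n v Hv (h0 - hs j)) => K1 H1.
  exists (maxn K K1) => j'; rewrite inE => /orP [/eqP -> | Hj] l Hl.
    by apply: H1; apply: leq_trans Hl; apply: leq_maxr.
  by apply: IH => //; apply: leq_trans Hl; apply: leq_maxl.
case: (key (enum 'I_m)) => K HK.
exists K => l Hl _ j; exists (hs j - v ord_max *+ l); split; last by rewrite subrK.
apply: (proj2 (Hreg h0 Hh0)).
rewrite /leS opprB addrA addrAC; apply: HK; [by rewrite mem_enum | exact: Hl].
Qed.
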